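(* Any quantum algorithm that solves the metric estimation problem on $n$ points with an approximation factor smaller than $3$ needs to make at least $\Omega(n^2)$ oracle calls.
   Context: Metric estimation: input is a metric space $\langle \mathcal{M},d\rangle$ with $\mathcal{M}=\{p_1,\dots,p_n\}$, accessible only via an oracle that on input $(i,j)$ returns $d(p_i,p_j)$. The output, with approximation factor $\alpha>1$, is an $n\times n$ matrix $A$ with $d(p_i,p_j)\le A[i][j]\le \alpha\, d(p_i,p_j)$ for all $1\le i,j\le n$. The complexity measure is the number of (quantum) oracle queries. *)

(* Defs.v *)
From HB Require Import structures.
From mathcomp Require Import all_boot all_order all_algebra.
From mathcomp Require Import spectral.
From mathcomp Require Import Rstruct.
From mathcomp Require Import complex.
From Stdlib Require Rdefinitions.
Notation R := Rdefinitions.R.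

Set Implicit Arguments.
Unset Strict Implicit.
Unset Printing Implicit Defensive.

Import Order.TTheory GRing.Theory Num.Theory.
Local Open Scope ring_scope.

Definition Cx : numClosedFieldType := (Rdefinitions.R)[i].

Definition is_metric (n : nat) (d : 'I_n -> 'I_n -> R) : Prop :=
  [/\ forall i j, 0 <= d i j,
      forall i j, d i j = 0 <-> i = j,
      forall i j, d i j = d j i
    & forall i j k, d i k <= d i j + d j k].

Definition estimates (n : nat) (alpha : R) (d : 'I_n -> 'I_n -> R)
    (A : 'M[R]_n) : bool :=
  [forall i, forall j, (d i j <= A i j) && (A i j <= alpha * d i j)].

(* Computational basis of the algorithm's register:
   query register (i, j), answer register in Z_(K+1), workspace W. *)
Definition qspace (n K : nat) (W : finType) : finType :=
  ('I_n * 'I_n * 'I_K.+1 * W)%type.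

Definition qdim (n K : nat) (W : finType) : nat := #|qspace n K W|.

(* A T-query quantum algorithm: unitaries U_0, ..., U_T interleaved with T
   oracle calls, a fixed initial basis state, and a classical output map
   applied to the outcome of the final computational-basis measurement. *)
Record qalg (n K : nat) (W : finType) (T : nat) := QAlg {
  qa_U : 'I_T.+1 -> 'M[Cx]_(qdim n K W);
  qa_unitary : forall t, qa_U t \is unitarymx;
  qa_init : qspace n K W;
  qa_out : qspace n K W -> 'M[R]_n }.

(* The (standard, XOR-type) query oracle for input x, where x i j encodes
   the answer d(p_i, p_j):  |i, j, v, w>  |->  |i, j, v + x i j, w>. *)
Definition oracle_shift (n K : nat) (W : finType)
    (x : 'I_n -> 'I_n -> 'I_K.+1) (s : qspace n K W) : qspace n K W :=
  let: (i, j, v, w) := s in (i, j, (v + x i j), w).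

Definition oracle_mx (n K : nat) (W : finType)
    (x : 'I_n -> 'I_n -> 'I_K.+1) : 'M[Cx]_(qdim n K W) :=
  \matrix_(a, b) ((enum_val a == oracle_shift x (enum_val b))%:R).

Definition basis_vec (n K : nat) (W : finType) (s : qspace n K W)
    : 'cV[Cx]_(qdim n K W) :=
  \col_a ((enum_val a == s)%:R).

Fixpoint qstate (n K : nat) (W : finType) (T : nat) (Q : qalg n K W T)
    (x : 'I_n -> 'I_n -> 'I_K.+1) (t : nat) : 'cV[Cx]_(qdim n K W) :=
  match t with
  | 0 => qa_U Q ord0 *m basis_vec (qa_init Q)
  | t'.+1 => qa_U Q (inord t'.+1) *m (@oracle_mx n K W x *m qstate Q x t')
  end.

Definition final_state (n K : nat) (W : finType) (T : nat) (Q : qalg n K W T)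
    (x : 'I_n -> 'I_n -> 'I_K.+1) : 'cV[Cx]_(qdim n K W) :=
  qstate Q x T.

Definition success_prob (n K : nat) (W : finType) (T : nat) (Q : qalg n K W T)
    (alpha : R) (val : 'I_K.+1 -> R) (x : 'I_n -> 'I_n -> 'I_K.+1) : Cx :=
  \sum_(s : qspace n K W |
          estimates alpha (fun i j => val (x i j)) (qa_out Q s))
     `|final_state Q x (enum_rank s) ord0| ^+ 2.

Definition solves_metric_estimation (n K : nat) (W : finType) (T : nat)
    (Q : qalg n K W T) (alpha : R) (val : 'I_K.+1 -> R) : Prop :=
  forall x : 'I_n -> 'I_n -> 'I_K.+1,
    is_metric (fun i j => val (x i j)) ->
    2%:R / 3%:R <= success_prob Q alpha val x.

(* Main.v *)
Require Import Defs.
From HB Require Import structures.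
From mathcomp Require Import all_boot all_order all_algebra.
From mathcomp Require Import spectral Rstruct complex sesquilinear.
From mathcomp Require Import zify.
From mathcomp.algebra_tactics Require Import lra.
Import Order.TTheory GRing.Theory Num.Theory.

Lemma sum_nat_mono (f : nat -> nat) a b : (a <= b)%N ->
  (\sum_(0 <= k < a) f k <= \sum_(0 <= k < b) f k)%N.
Proof. by move=> hab; rewrite (@big_cat_nat _ _ _ a 0 b) //= leq_addr. Qed.

Lemma pow_ineq N : (4 <= N)%N -> (3 ^ 4 * (2 ^ N * 81 ^ N) < 2 ^ 4 * (256 ^ N))%N.
Proof.
elim: N => [//|N IH]; rewrite leq_eqVlt => /orP[/eqP <-|]; first by lia.
rewrite ltnS => /IH {}IH.
have -> : (3 ^ 4 * (2 ^ N.+1 * 81 ^ N.+1) = 162 * (3 ^ 4 * (2 ^ N * 81 ^ N)))%N.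
  by rewrite !expnS; lia.
have -> : (2 ^ 4 * 256 ^ N.+1 = 256 * (2 ^ 4 * 256 ^ N))%N.
  by rewrite !expnS; lia.
apply: (@leq_trans (162 * (2 ^ 4 * 256 ^ N))); first by rewrite ltn_pmul2l.
by rewrite leq_mul2r; apply/orP; right.
Qed.

Lemma binom_tail N T : (4 * T < N)%N -> (4 <= N)%N ->
  (3 * \sum_(0 <= k < T.+1) 'C(N, k) < 2 * 2 ^ N)%N.
Proof.
move=> hT hN.
have h3 : (3 ^ N = \sum_(0 <= k < N.+1) 'C(N, k) * 2 ^ (N - k))%N.
  rewrite -[3]/(2 + 1) expnDn big_mkord; apply: eq_bigr => i _.
  by rewrite exp1n muln1.
have h1 : (2 ^ N * \sum_(0 <= k < T.+1) 'C(N, k) <= 2 ^ T * 3 ^ N)%N.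
  rewrite h3 big_distrr big_distrr /=.
  have hTN : (T.+1 <= N.+1)%N by lia.
  eapply leq_trans; last exact: (@sum_nat_mono (fun k => 2 ^ T * ('C(N, k) * 2 ^ (N - k))) _ _ hTN).
  rewrite !big_nat; apply: leq_sum => k /andP[_ hk].
  have [hkN|hkN] := leqP k N; last by rewrite bin_small // !muln0.
  rewrite mulnCA (mulnC (2 ^ N)) leq_mul2l; apply/orP; right.
  rewrite -{1}(subnKC hkN) expnD; apply: leq_mul => //; rewrite leq_exp2l //; lia.
have h2 : (3 * (2 ^ T * 3 ^ N) < 2 * (2 ^ N * 2 ^ N))%N.
  rewrite -(ltn_exp2r _ _ (_ : 0 < 4)%N) //.
  rewrite !expnMn -!expnM.
  have e1 : (2 ^ (T * 4) <= 2 ^ N)%N by rewrite leq_exp2l //; lia.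
  apply: (@leq_trans (3 ^ 4 * (2 ^ N * 3 ^ (N * 4))).+1).
    by rewrite ltnS leq_mul2l leq_mul2r e1 !orbT.
  have E1 : (3 ^ (N * 4) = 81 ^ N)%N by rewrite mulnC expnM.
  have E2 : (2 ^ (N * 4) * 2 ^ (N * 4) = 256 ^ N)%N by rewrite mulnC expnM -expnMn.
  rewrite E1 E2; exact: pow_ineq.
rewrite -(ltn_pmul2l (_ : 0 < 2 ^ N)%N) ?expn_gt0 //.
rewrite mulnCA [X in (_ < X)%N]mulnCA.
apply: leq_ltn_trans h2.
by rewrite leq_mul2l h1 orbT.
Qed.

Local Open Scope ring_scope.
Local Open Scope sesquilinear_scope.

Lemma CS_Cx r (a b : 'I_r -> Cx) :
  `|\sum_k a k * b k| ^+ 2 <= (\sum_k `|a k| ^+ 2) * (\sum_k `|b k| ^+ 2).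
Proof.
pose u0 : 'rV[Cx]_r := \row_k a k; pose v0 : 'rV[Cx]_r := \row_k (b k)^*.
have : `|dotmx u0 v0| ^+ 2 <= dotmx u0 u0 * dotmx v0 v0.
  by case: (CauchySchwarz (@dotmx Cx r) u0 v0).
rewrite /u0 /v0.
have e1 : forall (u v : 'rV[Cx]_r), dotmx u v = \sum_k u 0 k * (v 0 k)^*.
  by move=> u v; rewrite dotmxE !mxE; apply: eq_bigr => k _; rewrite !mxE.
rewrite !e1.
have -> : \sum_k (\row_k a k) 0 k * ((\row_k (b k)^*) 0 k)^* = \sum_k a k * b k.
  by apply: eq_bigr => k _; rewrite !mxE conjCK.
have -> : \sum_k (\row_k a k) 0 k * ((\row_k a k) 0 k)^* = \sum_k `|a k| ^+ 2.
  by apply: eq_bigr => k _; rewrite !mxE normCK.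
have -> : \sum_k (\row_k (b k)^*) 0 k * ((\row_k (b k)^*) 0 k)^* = \sum_k `|b k| ^+ 2.
  by apply: eq_bigr => k _; rewrite !mxE conjCK normCK mulrC.
done.
Qed.

Lemma sum_disj_le M D (P : 'I_M -> pred 'I_D) (c : 'I_D -> Cx)
  (hc : forall s, 0 <= c s)
  (hdisj : forall i i' s, P i s -> P i' s -> i = i') :
  \sum_i \sum_(s | P i s) c s <= \sum_s c s.
Proof.
rewrite (exchange_big_dep predT) //=; apply: ler_sum => s _.
have [i0 Pi0|none] := pickP (fun i => P i s).
  rewrite (bigD1 i0) //= big1 ?addr0 // => i /andP[Pi ne].
  by move: ne; rewrite (hdisj _ _ _ Pi Pi0) eqxx.
by rewrite big_pred0 // => i; rewrite none.
Qed.

Lemma norm_bound_aux r M D (Phi : 'M[Cx]_(M, D)) (L : 'M[Cx]_(r, D)) (W : 'M[Cx]_(M, r))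
  (P : 'I_M -> pred 'I_D)
  (hdisj : forall i i' s, P i s -> P i' s -> i = i')
  (hnorm : forall i, \sum_s `|Phi i s| ^+ 2 <= 1) :
  L \is unitarymx -> Phi = W *m L ->
  \sum_i \sum_(s | P i s) `|Phi i s| ^+ 2 <= r%:R.
Proof.
move=> Lu hW.
have LL : L *m L ^t* = 1%:M by apply/unitarymxP.
have hG : forall i, \sum_s `|Phi i s| ^+ 2 = \sum_k `|W i k| ^+ 2.
  move=> i.
  have : (Phi *m Phi ^t*) i i = (W *m W ^t*) i i.
    by rewrite hW trmx_mul map_mxM mulmxA -(mulmxA W) LL mulmx1.
  rewrite !mxE => E.
  rewrite (eq_bigr (fun s => Phi i s * (Phi ^t*) s i)); last first.
    by move=> s _; rewrite !mxE normCK.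
  rewrite E; apply: eq_bigr => k _; by rewrite !mxE normCK.
pose c s := \sum_k `|L k s| ^+ 2.
have hc : forall s, 0 <= c s by move=> s; apply: sumr_ge0 => k _; exact: (exprn_ge0 _ (normr_ge0 _)).
apply: (le_trans (y := \sum_i \sum_(s | P i s) c s)).
  apply: ler_sum => i _; apply: ler_sum => s _.
  have -> : Phi i s = \sum_k W i k * L k s by rewrite hW mxE.
  have H := @CS_Cx _ (fun k => W i k) (fun k => L k s).
  apply: (le_trans H).
  rewrite -hG; apply: ler_piMl => //; apply: sumr_ge0 => k _; exact: (exprn_ge0 _ (normr_ge0 _)).
apply: le_trans (@sum_disj_le _ _ _ _ hc hdisj) _.
rewrite /c exchange_big /=.
have -> : \sum_k \sum_s `|L k s| ^+ 2 = \sum_(k < r) 1.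
  apply: eq_bigr => k _.
  transitivity ((L *m L ^t*) k k); last by rewrite LL mxE eqxx.
  by rewrite mxE; apply: eq_bigr => s _; rewrite !mxE normCK.
by rewrite sumr_const card_ord.
Qed.

Lemma norm_bound M D (Phi : 'M[Cx]_(M, D)) (P : 'I_M -> pred 'I_D)
  (hdisj : forall i i' s, P i s -> P i' s -> i = i')
  (hnorm : forall i, \sum_s `|Phi i s| ^+ 2 <= 1) :
  \sum_i \sum_(s | P i s) `|Phi i s| ^+ 2 <= (\rank Phi)%:R.
Proof.
have Lu : schmidt (row_base Phi) \is unitarymx.
  by apply: schmidt_unitarymx; apply: rank_leq_col.
have /submxP [W hW] : (Phi <= schmidt (row_base Phi))%MS.
  by apply: submx_trans (schmidt_sub _); rewrite eq_row_base.
exact: (@norm_bound_aux _ _ _ _ _ _ _ hdisj hnorm Lu hW).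
Qed.


Section RankStates.
Variable X : finType.
Local Notation NB := #|{set X}|.

Definition St (t : nat) := [set S : {set X} | (#|S| <= t)%N].
Definition chi (S : {set X}) : 'rV[Cx]_NB := \row_(j < NB) ((S \subset enum_val j)%:R).
Definition Pm (t : nat) : 'M[Cx]_(#|St t|, NB) :=
  \matrix_(k < #|St t|, j < NB) (((@enum_val _ (mem (St t)) k) \subset enum_val j)%:R).
Definition Dg (e : X) : 'M[Cx]_NB := diag_mx (\row_(j < NB) ((e \in enum_val j)%:R)).

Lemma chi_sub t (S : {set X}) : (#|S| <= t)%N -> (chi S <= Pm t)%MS.
Proof.
move=> hS; have HS : S \in St t by rewrite inE.
have -> : chi S = row (enum_rank_in HS S) (Pm t).
  by apply/rowP => j; rewrite !mxE enum_rankK_in.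
exact: row_sub.
Qed.

Lemma row_Pm t k : row k (Pm t) = chi (@enum_val _ (mem (St t)) k).
Proof. by apply/rowP => j; rewrite !mxE. Qed.

Lemma Pm_card t k : (#|@enum_val _ (mem (St t)) k| <= t)%N.
Proof. by have := enum_valP k; rewrite inE. Qed.

Lemma Pm_sub t : (Pm t <= Pm t.+1)%MS.
Proof.
apply/row_subP => k; rewrite row_Pm; apply: chi_sub.
exact: leqW (Pm_card _ k).
Qed.

Lemma Pm_mul t e : (Pm t *m Dg e <= Pm t.+1)%MS.
Proof.
apply/row_subP => k; rewrite row_mul row_Pm.
set S := enum_val k.
have -> : chi S *m Dg e = chi (e |: S).
  apply/rowP => j; rewrite mul_mx_diag !mxE subUset sub1set.
  by case: (e \in enum_val j); case: (S \subset enum_val j); rewrite ?mulr1 ?mulr0.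
apply: chi_sub; rewrite cardsU1.
by have := Pm_card _ k; case: (e \in S) => /=; rewrite ?add1n ?add0n // => /leqW.
Qed.

Variables (D : nat) (M0 : 'M[Cx]_D) (Del : X -> 'M[Cx]_D) (U : nat -> 'M[Cx]_D)
  (v : 'cV[Cx]_D) (psi : {set X} -> nat -> 'cV[Cx]_D).
Hypothesis H0 : forall B, psi B 0 = U 0 *m v.
Hypothesis HS : forall B t,
  psi B t.+1 = U t.+1 *m ((M0 + \sum_(e in B) Del e) *m psi B t).

Definition Psi t : 'M[Cx]_(D, NB) := \matrix_(a < D, j < NB) psi (enum_val j) t a 0.

Lemma Psi_sub t : (Psi t <= Pm t)%MS.
Proof.
elim: t => [|t IH].
  have -> : Psi 0 = (U 0 *m v) *m chi set0.
    apply/matrixP => a j; rewrite !mxE big_ord1 !mxE sub0set mulr1 H0.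
    by rewrite mxE.
  by apply: mulmx_sub; apply: chi_sub; rewrite cards0.
have -> : Psi t.+1 = U t.+1 *m (M0 *m Psi t + \sum_e (Del e *m Psi t *m Dg e)).
  apply/matrixP => a j; rewrite !mxE HS mxE; apply: eq_bigr => c _; congr (_ * _).
  rewrite mulmxDl mulmx_suml !mxE summxE; congr (_ + _).
    by apply: eq_bigr => b _; rewrite /Psi !mxE.
  rewrite big_mkcond summxE /=; apply: eq_bigr => e _.
  rewrite mul_mx_diag !mxE.
  case: (e \in enum_val j); rewrite ?mulr1 ?mulr0 //.
  by apply: eq_bigr => b _; rewrite /Psi !mxE.
apply: mulmx_sub; apply: addmx_sub.
  by apply: mulmx_sub; apply: submx_trans IH (Pm_sub t).
apply: summx_sub => e _; rewrite -mulmxA; apply: mulmx_sub.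
by apply: submx_trans (Pm_mul t e); apply: submxMr.
Qed.

Lemma rank_Psi t : (\rank (Psi t) <= #|St t|)%N.
Proof. exact: leq_trans (mxrankS (Psi_sub t)) (rank_leq_row _). Qed.

End RankStates.


Section Inst.
Variables (n m : nat).
Hypothesis hnm : (m + m <= n)%N.
Local Notation X := ('I_m * 'I_m)%type.

Definition em (e : X) (i j : 'I_n) : bool :=
  ((e.1 : nat) == i) && (m + e.2 == j)%N || ((e.1 : nat) == j) && (m + e.2 == i)%N.

Definition bit (B : {set X}) (i j : 'I_n) : bool := [exists e in B, em e i j].

Lemma em_side e i j : em e i j -> (i < m)%N != (j < m)%N.
Proof.
case: e => [e1 e2] /=; rewrite /em /= => /orP[] /andP[/eqP <- /eqP <-];
  rewrite ltn_ord; have := ltn_ord e1; lia.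
Qed.

Lemma em_neq e i j : em e i j -> i != j.
Proof. by move=> /em_side; apply: contra => /eqP ->. Qed.

Lemma em_uniq e e' i j : em e i j -> em e' i j -> e = e'.
Proof.
case: e e' => [e1 e2] [f1 f2]; rewrite /em /= => h1 h2.
have := ltn_ord e1; have := ltn_ord f1.
move: h1 h2 => /orP[] /andP[/eqP h1 /eqP h1'] /orP[] /andP[/eqP h2 /eqP h2'] l1 l2;
  try lia;
  by congr pair; apply: val_inj => /=; lia.
Qed.

Lemma em_sym e i j : em e i j = em e j i.
Proof. by rewrite /em orbC. Qed.

Lemma bit_sym B i j : bit B i j = bit B j i.
Proof. by apply: eq_existsb => e; rewrite em_sym. Qed.

Lemma bit_side B i j : bit B i j -> (i < m)%N != (j < m)%N.
Proof. by case/existsP => e /andP[_ /em_side]. Qed.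

Definition dB (B : {set X}) (i j : 'I_n) : R :=
  if i == j then 0 else if bit B i j then 3%:R else if (i < m)%N == (j < m)%N then 2%:R else 1.

Lemma dB_metric B : is_metric (dB B).
Proof.
have ge1 : forall i j, i != j -> 1 <= dB B i j.
  move=> i j /negPf hij; rewrite /dB hij /=.
  by repeat case: ifP => _; rewrite ?ler_nat ?ler1n ?ler0n //; lra.
have le3 : forall i j, dB B i j <= 3%:R.
  move=> i j; rewrite /dB.
  by repeat case: ifP => _; rewrite ?ler_nat ?ler1n ?ler0n //; lra.
have d3 : forall i j, 2%:R < dB B i j -> (i < m)%N != (j < m)%N.
  move=> i j; rewrite /dB; case: ifP => _; first lra.
  case hb: bit; first by move=> _; apply: bit_side hb.
  by case: ifP => h; [lra | move=> _; apply: negbT].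
have d1 : forall i j, i != j -> dB B i j < 2%:R -> (i < m)%N != (j < m)%N.
  move=> i j /negPf hij; rewrite /dB hij; case: bit; first lra.
  by case: ifP => h; [lra | move=> _; apply: negbT].
split.
- move=> i j; rewrite /dB.
  by repeat case: ifP => _; rewrite ?ler_nat ?ler1n ?ler0n //; lra.
- move=> i j; split; last by move=> ->; rewrite /dB eqxx.
  move=> h; have [//|nij] := eqVneq i j; by have := ge1 _ _ nij; rewrite h ler10.
- by move=> i j; rewrite /dB bit_sym (eq_sym j i) (eq_sym (j < m)%N).
- move=> i j k.
  have [->|nik] := eqVneq i k.
    rewrite {1}/dB eqxx.
    have h1 : forall a b, 0 <= dB B a b.
      move=> a b; rewrite /dB.
      by repeat case: ifP => _; rewrite ?ler_nat ?ler1n ?ler0n //; lra.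
    by have := h1 k j; have := h1 j k; lra.
  have [->|nij] := eqVneq i j; first by rewrite {2}/dB eqxx add0r.
  have [->|njk] := eqVneq j k; first by rewrite [dB B k k]/dB eqxx addr0.
  have := ge1 _ _ nij; have := ge1 _ _ njk; have := le3 i k.
  case: (ltrP 2%:R (dB B i k)) => [/d3 hs|h2]; last by lra.
  case: (ltrP (dB B i j) 2%:R) => [/(d1 _ _ nij) h1|]; last by lra.
  case: (ltrP (dB B j k) 2%:R) => [/(d1 _ _ njk) h3|]; last by lra.
  by move: hs h1 h3; case: (i < m)%N; case: (j < m)%N; case: (k < m)%N.
Qed.

Definition li (e : X) : 'I_n := Ordinal (leq_trans (ltn_ord e.1) (leq_trans (leq_addr m m) hnm)).
Definition ri (e : X) : 'I_n.
Proof. refine (@Ordinal n (m + e.2) _); have := ltn_ord e.2; lia. Defined.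

Lemma em_li_ri e : em e (li e) (ri e).
Proof. by rewrite /em /= !eqxx. Qed.

Lemma disj_est (alpha : R) (A : 'M[R]_n) B B' : alpha < 3%:R ->
  estimates alpha (dB B) A -> estimates alpha (dB B') A -> B = B'.
Proof.
move=> ha.
wlog suff : B B' / forall e, e \in B -> estimates alpha (dB B) A ->
   estimates alpha (dB B') A -> e \in B'.
  move=> H hB hB'; apply/setP => e; apply/idP/idP => he.
    exact: (H B B').
  exact: (H B' B).
move=> e eB hB hB'; apply: contraT => eB'.
have neq : li e != ri e by apply: (@em_neq _ _ _ (em_li_ri e)).
have b1 : bit B (li e) (ri e) by apply/existsP; exists e; rewrite eB em_li_ri.
have b2 : ~~ bit B' (li e) (ri e).
  apply/existsP => -[f /andP[fB' hf]].
  by move: eB'; rewrite -(@em_uniq _ _ _ _ hf (em_li_ri e)) fB'.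
have side := @em_side _ _ _ (em_li_ri e).
move/forallP: hB => /(_ (li e)) /forallP /(_ (ri e)) /andP[h1 _].
move/forallP: hB' => /(_ (li e)) /forallP /(_ (ri e)) /andP[_ h2].
move: h1 h2; rewrite /dB (negPf neq) b1 (negPf b2) (negPf side) mulr1 => h1 h2.
have : (3%:R : R) <= alpha by apply: le_trans h1 h2.
by rewrite leNgt ha.
Qed.

End Inst.


Section Q.
Variables (n K : nat) (W : finType).
Local Notation D := (qdim n K W).

Definition nrm (v : 'cV[Cx]_D) := \sum_s `|v s 0| ^+ 2.

Lemma nrmE v : nrm v = (v ^t* *m v) 0 0.
Proof. by rewrite /nrm mxE; apply: eq_bigr => s _; rewrite !mxE normCK mulrC. Qed.

Lemma nrm_mul (M : 'M[Cx]_D) v : M ^t* *m M = 1%:M -> nrm (M *m v) = nrm v.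
Proof.
move=> H; rewrite !nrmE trmx_mul map_mxM mulmxA -(mulmxA _ _ M) H mulmx1 //.
Qed.

Lemma unitary_tc (M : 'M[Cx]_D) : M \is unitarymx -> M ^t* *m M = 1%:M.
Proof. by move/unitarymxP/mulmx1C. Qed.

Lemma oracle_shift_inj (x : 'I_n -> 'I_n -> 'I_K.+1) : injective (@oracle_shift n K W x).
Proof.
move=> [[[i j] v] w] [[[i' j'] v'] w'] /= E.
have ei := congr1 (fun s : qspace n K W => s.1.1.1) E.
have ej := congr1 (fun s : qspace n K W => s.1.1.2) E.
have ev := congr1 (fun s : qspace n K W => s.1.2) E.
have ew := congr1 (fun s : qspace n K W => s.2) E.
simpl in ei, ej, ev, ew.
by subst i' j' w'; rewrite (addIr _ ev).
Qed.

Lemma oracle_tc (x : 'I_n -> 'I_n -> 'I_K.+1) : (oracle_mx W x) ^t* *m oracle_mx W x = 1%:M.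
Proof.
apply/matrixP => b b'; rewrite !mxE.
rewrite (bigD1 (enum_rank (oracle_shift x (enum_val b)))) //= big1.
  rewrite !mxE enum_rankK eqxx conjC_nat mul1r addr0.
  by rewrite (inj_eq (@oracle_shift_inj x)) (inj_eq enum_val_inj) eq_sym.
move=> a ha; rewrite !mxE.
have -> : (enum_val a == oracle_shift x (enum_val b)) = false.
  apply/negbTE; apply: contra ha => /eqP <-; by rewrite enum_valK.
by rewrite conjC0 mul0r.
Qed.

Lemma basis_nrm s : nrm (@basis_vec n K W s) = 1.
Proof.
rewrite /nrm (bigD1 (enum_rank s)) //= big1.
  by rewrite !mxE enum_rankK eqxx normr1 expr1n addr0.
move=> a ha; rewrite !mxE.
have -> : (enum_val a == s) = false.
  apply/negbTE; apply: contra ha => /eqP <-; by rewrite enum_valK.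
by rewrite normr0 expr0n.
Qed.

Lemma qstate_nrm T (Q : qalg n K W T) x t : nrm (qstate Q x t) = 1.
Proof.
elim: t => [|t IH] /=.
  by rewrite nrm_mul ?basis_nrm // unitary_tc // qa_unitary.
by rewrite nrm_mul ?unitary_tc ?qa_unitary // nrm_mul ?oracle_tc.
Qed.

Lemma success_reindex T (Q : qalg n K W T) alpha val x :
  success_prob Q alpha val x =
  \sum_(a < D | estimates alpha (fun i j => val (x i j)) (qa_out Q (enum_val a)))
     `|final_state Q x a 0| ^+ 2.
Proof.
rewrite /success_prob (reindex (@enum_val (qspace n K W) predT)) /=.
  by apply: eq_bigr => a _; rewrite enum_valK.
by apply: onW_bij; apply: enum_val_bij.
Qed.

End Q.


Lemma card_setT (X : finType) : #|{set X}| = (2 ^ #|X|)%N.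
Proof.
rewrite -cardsT -card_powerset; apply: eq_card => S.
by rewrite powersetE subsetT.
Qed.

Lemma sum_bool_card (X : finType) (p : pred X) : (\sum_(x : X) (p x : nat) = #|[set x | p x]|)%N.
Proof. by rewrite -sum1dep_card [RHS]big_mkcond; apply: eq_bigr => x _; case: (p x). Qed.

Lemma card_St (X : finType) t : #|St X t| = (\sum_(0 <= k < t.+1) 'C(#|X|, k))%N.
Proof.
rewrite /St -sum_bool_card.
have -> : (\sum_(S : {set X}) (#|S| <= t)%N : nat) =
          (\sum_(S : {set X}) \sum_(0 <= k < t.+1) (#|S| == k) : nat)%N.
  apply: eq_bigr => S _.
  rewrite -big_mkcond /= sum1_count.
  have := count_uniq_mem #|S| (iota_uniq 0 t.+1).
  rewrite mem_iota add0n ltnS /= => <-.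
  by rewrite eq_sym; congr addn; apply: eq_count => k /=; rewrite eq_sym.
rewrite exchange_big /=; apply: eq_bigr => k _.
by rewrite sum_bool_card card_draws.
Qed.

Section Main.
Variables (n m K : nat) (W : finType) (T : nat) (Q : qalg n K W T).
Hypothesis hnm : (m + m <= n)%N.
Variables (val : 'I_K.+1 -> R) (v0 v1 v2 v3 : 'I_K.+1).
Hypotheses (hv0 : val v0 = 0) (hv1 : val v1 = 1) (hv2 : val v2 = 2%:R) (hv3 : val v3 = 3%:R).
Local Notation X := ('I_m * 'I_m)%type.
Local Notation Dm := (qdim n K W).

Definition xB (B : {set X}) (i j : 'I_n) : 'I_K.+1 :=
  if i == j then v0 else if bit n m B i j then v3
  else if (i < m)%N == (j < m)%N then v2 else v1.

Lemma val_xB B i j : val (xB B i j) = dB n m B i j.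
Proof.
rewrite /xB /dB; case: (i == j); first exact: hv0.
case: (bit n m B i j); first exact: hv3.
by case: ((i < m)%N == (j < m)%N).
Qed.

Lemma bit0 i j : bit n m set0 i j = false.
Proof. by apply/existsP => -[e]; rewrite inE. Qed.

Definition x0 := xB set0.
Definition x3 := fun _ _ : 'I_n => v3.

Definition Del (e : X) : 'M[Cx]_Dm :=
  \matrix_(c, b) ((em n m e (enum_val b).1.1.1 (enum_val b).1.1.2)%:R *
                  (oracle_mx W x3 c b - oracle_mx W x0 c b)).

Lemma oracle_decomp B : oracle_mx W (xB B) = oracle_mx W x0 + \sum_(e in B) Del e.
Proof.
apply/matrixP => c b; rewrite !mxE summxE.
have [hb|hb] := boolP (bit n m B (enum_val b).1.1.1 (enum_val b).1.1.2).
  case/existsP: (hb) => e0 /andP[e0B he0].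
  rewrite (bigD1 e0) //= big1 => [|e /andP[eB ne]]; last first.
    rewrite !mxE.
    have -> : em n m e (enum_val b).1.1.1 (enum_val b).1.1.2 = false.
      apply/negbTE; apply: contra ne => h; apply/eqP.
      exact: (@em_uniq n m hnm _ _ _ _ h he0).
    by rewrite mul0r.
  rewrite !mxE he0 mul1r addr0 addrC subrK.
  move: hb he0; case: (enum_val b) => [[[i j] vv] w] /= hb he0.
  by rewrite /xB /x3 (negPf (@em_neq n m hnm _ _ _ he0)) hb.
rewrite big1 => [|e eB]; last first.
  rewrite !mxE.
  have -> : em n m e (enum_val b).1.1.1 (enum_val b).1.1.2 = false.
    apply/negbTE; apply: contra hb => h; apply/existsP; exists e; by rewrite eB h.
  by rewrite mul0r.
rewrite addr0.
move: hb; case: (enum_val b) => [[[i j] vv] w] /= hb.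
by rewrite /x0 /xB (negPf hb) bit0.
Qed.

Definition psi (B : {set X}) (t : nat) := qstate Q (xB B) t.
Definition Uq (t : nat) := qa_U Q (inord t).

Lemma psi0 B : psi B 0 = Uq 0 *m basis_vec (qa_init Q).
Proof.
rewrite /psi /Uq /=.
have -> : (inord 0 : 'I_T.+1) = ord0 by apply: val_inj; rewrite /= inordK.
by [].
Qed.

Lemma psiS B t : psi B t.+1 = Uq t.+1 *m ((oracle_mx W x0 + \sum_(e in B) Del e) *m psi B t).
Proof. by rewrite /psi /Uq /= oracle_decomp. Qed.

Definition Phi : 'M[Cx]_(#|{set X}|, Dm) :=
  \matrix_(j, a) final_state Q (xB (enum_val j)) a 0.

Lemma rank_Phi : (\rank Phi <= #|St X T|)%N.
Proof.
have -> : Phi = (Psi _ _ psi T)^T by apply/matrixP => j a; rewrite !mxE.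
rewrite mxrank_tr.
exact: (@rank_Psi X Dm (oracle_mx W x0) Del Uq (basis_vec (qa_init Q)) psi psi0 psiS T).
Qed.

Lemma est_eq alpha B (A : 'M[R]_n) :
  estimates alpha (fun i j => val (xB B i j)) A = estimates alpha (dB n m B) A.
Proof. by apply: eq_forallb => i; apply: eq_forallb => j; rewrite val_xB. Qed.

Lemma metric_xB B : is_metric (fun i j => val (xB B i j)).
Proof.
case: (@dB_metric n m hnm B) => h1 h2 h3 h4.
split => [i j|i j|i j|i j k]; rewrite ?val_xB //; exact: h4.
Qed.

Lemma main_count alpha : alpha < 3%:R -> solves_metric_estimation Q alpha val ->
  (2 * 2 ^ (m * m) <= 3 * #|St X T|)%N.
Proof.
move=> ha hsol.
pose P (j : 'I_#|{set X}|) (a : 'I_Dm) :=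
  estimates alpha (fun i k => val (xB (enum_val j) i k)) (qa_out Q (enum_val a)).
have hdisj : forall j j' a, P j a -> P j' a -> j = j'.
  move=> j j' a; rewrite /P !est_eq => h h'.
  by apply: enum_val_inj; apply: (@disj_est n m hnm _ _ _ _ ha h h').
have hnorm : forall j, \sum_a `|Phi j a| ^+ 2 <= 1.
  move=> j; have := @qstate_nrm _ _ _ _ Q (xB (enum_val j)) T; rewrite /nrm => <-.
  by rewrite le_eqVlt; apply/orP; left; apply/eqP/eq_bigr => a _; rewrite !mxE.
have key := @norm_bound _ _ _ _ hdisj hnorm.
have succ : forall j, 2%:R / 3%:R <= \sum_(a | P j a) `|Phi j a| ^+ 2.
  move=> j; have := hsol _ (metric_xB (enum_val j)).
  rewrite success_reindex.
  by move=> H; apply: (le_trans H); rewrite le_eqVlt; apply/orP; left; apply/eqP/eq_bigr => a _; rewrite /Phi !mxE.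
have h : (2%:R / 3%:R) *+ #|{set X}| <= (#|St X T|)%:R :> Cx.
  apply: le_trans (le_trans key _); last by rewrite ler_nat rank_Phi.
  have -> : (2%:R / 3%:R) *+ #|{set X}| = \sum_(j < #|{set X}|) (2%:R / 3%:R : Cx) by rewrite sumr_const card_ord.
  by apply: ler_sum => j _; exact: succ j.
have h' : (3%:R : Cx) * ((2%:R / 3%:R) * (#|{set X}|)%:R) <= 3%:R * (#|St X T|)%:R.
  by rewrite ler_pM2l ?ltr0n // mulr_natr.
rewrite mulrA [3%:R * _]mulrC divfK ?pnatr_eq0 // -!natrM ler_nat in h'.
have e : (2 ^ (m * m) = #|{set X}|)%N by rewrite card_setT card_prod !card_ord.
by rewrite e.
Qed.

End Main.

Local Close Scope sesquilinear_scope.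

Theorem mainTheorem5 :
  forall alpha : R, 1 < alpha -> alpha < 3%:R ->
  exists c : R, 0 < c /\
  exists N0 : nat, forall n : nat, (N0 <= n)%N ->
  forall (K : nat) (val : 'I_K.+1 -> R),
    (forall k : nat, (k <= 3)%N -> exists v, val v = k%:R) ->
  forall (W : finType) (T : nat) (Q : qalg n K W T),
    solves_metric_estimation Q alpha val ->
    c * (n%:R) ^+ 2 <= T%:R.
Proof.
move=> alpha ha1 ha3; exists (1 / 64%:R); split; first by rewrite divr_gt0 ?ltr0n.
exists 4%N => n hn K val hval W T Q hsol.
have [v0 hv0] := hval 0%N isT.
have [v1 hv1] := hval 1%N isT.
have [v2 hv2] := hval 2%N isT.
have [v3 hv3] := hval 3%N isT.
set m := n./2.
have eo := odd_double_half n.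
have ho : (odd n <= 1)%N by case: (odd n).
have hnm : (m + m <= n)%N by rewrite addnn; lia.
have hm2 : (2 <= m)%N by rewrite /m -[2%N]/(4./2); apply: half_leq.
have hc := @main_count n m K W T Q hnm val v0 v1 v2 v3 hv0 hv1 hv2 hv3 alpha ha3 hsol.
rewrite card_St card_prod !card_ord in hc.
have hT : (m * m <= 4 * T)%N.
  rewrite leqNgt; apply/negP => hlt.
  have h4 : (4 <= m * m)%N by nia.
  have := @binom_tail (m * m) T hlt h4.
  by rewrite ltnNge hc.
have hn2 : (n * n <= 64 * T)%N by rewrite addnn in hnm; nia.
have : (n * n)%:R <= (64 * T)%:R :> R by rewrite ler_nat.
rewrite !natrM -expr2 => h.
rewrite mul1r ler_pdivrMl ?ltr0n //.
Qed.
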